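(* Let $d\ge2$ and let $\rho$ be a finite-dimensional representation of the Jacobi algebra $\mathbb C\langle a,b,c\rangle/([b,c],\,[c,a],\,[a,b]+d\,c^{d-1})$. Then each of the operators $\rho(a),\rho(b),\rho(c)$ preserves the generalized eigenspaces of each of the others, and $\rho(c)$ is nilpotent (its only generalized eigenvalue is $0$). Consequently $\rho$ decomposes canonically as $\rho\cong\bigoplus_{s\in\Sigma}\rho_s$ into nonzero submodules, with $\Sigma\subset\mathbb C^2$ finite, where for $s=(s_1,s_2)$ the generalized eigenvalues of $\rho(a),\rho(b),\rho(c)$ on $\rho_s$ are $s_1,s_2,0$ respectively.
   Context: This algebra is the Jacobi algebra of the three-loop quiver with potential $W_d=[a,b]c+c^d$, i.e. the quotient of the free algebra by the cyclic derivatives of $W_d$ with respect to $a,b,c$. *)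

(* Defs.v *)
(* the field C is modelled by algC (algebraic complex numbers,
   an algebraically closed field of characteristic 0). *)
From HB Require Import structures.
From mathcomp Require Import all_boot all_order all_algebra all_field.
Set Implicit Arguments. Unset Strict Implicit. Unset Printing Implicit Defensive.
Import Order.TTheory GRing.Theory Num.Theory.
Local Open Scope ring_scope.

(* A finite-dimensional representation of
     C<a,b,c> / ([b,c], [c,a], [a,b] + d c^(d-1))
   on C^n is a triple of n x n matrices A = rho(a), B = rho(b), C = rho(c),
   acting on COLUMN vectors, satisfying the defining relations. *)
Definition jacobi_rep (d n : nat) (A B C : 'M[algC]_n) : Prop :=
  [/\ B *m C - C *m B = 0,
      C *m A - A *m C = 0 &
      (A *m B - B *m A) + (C ^+ d.-1) *+ d = 0].

(* Generalized eigenspace of M (acting on column vectors) for eigenvalue l: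
   { v | (M - l)^n v = 0 }.  Since mxalgebra works with row spaces, we
   represent it as the row space of transposes of such column vectors,
   i.e. the row kernel of ((M - l)^n)^T. *)
Definition geneig (n : nat) (M : 'M[algC]_n) (l : algC) : 'M[algC]_n :=
  kermx (((M - l%:M) ^+ n)^T).

(* The subspace V (in the transposed convention above) is invariant under the
   operator X acting on column vectors:  v in V -> X v in V. *)
Definition op_stable (n : nat) (V X : 'M[algC]_n) : bool :=
  stablemx V X^T.

Definition preserves_geneigs (n : nat) (X Y : 'M[algC]_n) : Prop :=
  forall l : algC, op_stable (geneig Y l) X.

Definition joint_geneig (n : nat) (A B : 'M[algC]_n) (s : algC * algC)
  : 'M[algC]_n := (geneig A s.1 :&: geneig B s.2)%MS.

(* Main.v *)
Require Import Defs.
From HB Require Import structures.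
From mathcomp Require Import all_boot all_order all_algebra all_field.
Import Order.TTheory GRing.Theory Num.Theory.
Local Open Scope ring_scope.

Set Implicit Arguments. Unset Strict Implicit. Unset Printing Implicit Defensive.

Section SeqSums.
Variable F : fieldType.
Variables (T : eqType) (n : nat).

Lemma ssum_sup (r : seq T) (A : T -> 'M[F]_n) x :
  x \in r -> (A x <= \sum_(y <- r) A y)%MS.
Proof.
elim: r => // y r IH; rewrite inE big_cons => /orP[/eqP->|xr].
  exact: addsmxSl.
exact: submx_trans (IH xr) (addsmxSr _ _).
Qed.

Lemma ssum_subP m (r : seq T) (A : T -> 'M[F]_n) (B : 'M[F]_(m, n)) :
  (forall x, x \in r -> (A x <= B)%MS) -> (\sum_(y <- r) A y <= B)%MS.
Proof.
elim: r => [|y r IH] H; first by rewrite big_nil sub0mx.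
rewrite big_cons addsmx_sub H ?mem_head //= IH // => x xr.
by apply: H; rewrite inE xr orbT.
Qed.

Lemma ssum_mono (r : seq T) (A B : T -> 'M[F]_n) :
  (forall x, x \in r -> (A x <= B x)%MS) ->
  (\sum_(y <- r) A y <= \sum_(y <- r) B y)%MS.
Proof.
move=> H; apply: ssum_subP => x xr.
exact: submx_trans (H x xr) (ssum_sup _ xr).
Qed.

End SeqSums.

Lemma ssumMr (F : fieldType) (T : eqType) k m (r : seq T) (A : T -> 'M[F]_k) (W : 'M[F]_(k, m)) :
  ((\sum_(y <- r) A y)%MS *m W <= \sum_(y <- r) <<A y *m W>>)%MS.
Proof.
elim: r => [|y r IH]; first by rewrite !big_nil mul0mx sub0mx.
rewrite !big_cons; rewrite (addsmxMr _ _ _).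
by apply: addsmxS => //; rewrite genmxE.
Qed.


Section KerChain.
Variable F : fieldType.
Variable n : nat.
Implicit Type h : 'M[F]_n.

Lemma kerX_mono h j i : (kermx (h ^+ j) <= kermx (h ^+ (i + j)))%MS.
Proof.
apply/sub_kermxP; rewrite addnC exprD -mulmxE mulmxA mulmx_ker.
by rewrite mul0mx.
Qed.

Lemma kerX_step h j : (kermx (h ^+ j.+1) <= kermx (h ^+ j))%MS ->
  (kermx (h ^+ j.+2) <= kermx (h ^+ j.+1))%MS.
Proof.
move=> H; apply/sub_kermxP.
have H1 : (kermx (h ^+ j.+2) *m h <= kermx (h ^+ j.+1))%MS.
  apply/sub_kermxP; rewrite -mulmxA mulmxE -exprS -mulmxE; exact: mulmx_ker.
have /sub_kermxP := submx_trans H1 H.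
by rewrite [h ^+ j.+1]exprS -mulmxE mulmxA.
Qed.

Lemma kerX_stab h j : (kermx (h ^+ j.+1) <= kermx (h ^+ j))%MS ->
  forall i, (kermx (h ^+ (i + j).+1) <= kermx (h ^+ (i + j)))%MS.
Proof. by move=> H; elim=> // i IH; rewrite addSn; apply: kerX_step. Qed.

Lemma kerX_n h : (kermx (h ^+ n.+1) <= kermx (h ^+ n))%MS.
Proof.
apply/negPn/negP => Hn.
have strict j : (j <= n)%N ->
    (\rank (kermx (h ^+ j)) < \rank (kermx (h ^+ j.+1)))%N.
  move=> jn.
  have Nj : ~~ (kermx (h ^+ j.+1) <= kermx (h ^+ j))%MS.
    apply/negP => Hj; move/negP: Hn; apply.
    by have := kerX_stab Hj (n - j); rewrite subnK.
  have lt : (kermx (h ^+ j) < kermx (h ^+ j.+1))%MS.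
    by rewrite ltmxE Nj andbT (kerX_mono h j 1).
  by move: lt; rewrite ltmxErank => /andP[].
have ge j : (j <= n.+1)%N -> (j <= \rank (kermx (h ^+ j)))%N.
  elim: j => // j IH jn.
  exact: leq_ltn_trans (IH (ltnW jn)) (strict j jn).
have := ge n.+1 (leqnn _); rewrite leqNgt ltnS rank_leq_col //.
Qed.

Lemma kerX_big h k : (kermx (h ^+ (n + k)) <= kermx (h ^+ n))%MS.
Proof.
elim: k => [|k IH]; first by rewrite addn0.
apply: submx_trans IH; rewrite addnS addnC.
exact: (kerX_stab (kerX_n h) k).
Qed.

End KerChain.

Definition gp (e : nat) (x : algC) : {poly algC} := ('X - x%:P) ^+ e.

Lemma coprime_gp e x y : x != y -> coprimep (gp e x) (gp e y).
Proof.
move=> xy; rewrite /gp coprimep_expr // coprimep_expl //.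
by rewrite coprimep_XsubC root_XsubC eq_sym.
Qed.

Lemma coprime_gp_prod e x (r : seq algC) :
  x \notin r -> coprimep (gp e x) (\prod_(y <- r) gp e y).
Proof.
move=> xr; rewrite big_seq; apply: (big_ind (fun q => coprimep (gp e x) q)) => //.
- exact: coprimep1.
- by move=> p q Hp Hq; rewrite coprimepMr Hp Hq.
- by move=> y yr; apply: coprime_gp; apply: contraNneq xr => ->.
Qed.

Lemma kerprod k (g : 'M[algC]_k) e (r : seq algC) : uniq r ->
  (kermxpoly g (\prod_(x <- r) gp e x) :=: \sum_(x <- r) kermxpoly g (gp e x))%MS.
Proof.
elim: r => [|x r IH] /=; first by rewrite !big_nil kermxpoly1.
move=> /andP[xr ur]; rewrite !big_cons.
apply: eqmx_trans (kermxpolyM _ (coprime_gp_prod e xr)) _.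
exact: adds_eqmx (eqmx_refl _) (IH ur).
Qed.

Lemma kermxpolyE k (g : 'M[algC]_k) e x :
  kermxpoly g (gp e x) = kermx ((g - x%:M) ^+ e).
Proof.
case: k => [|k] in g *; first by rewrite !thinmx0.
by rewrite /kermxpoly /gp rmorphXn /= rmorphB /= horner_mx_X horner_mx_C.
Qed.

Definition rts n (f : 'M[algC]_n) : seq algC :=
  sval (closed_field_poly_normal (char_poly f)).

Lemma char_rts n (f : 'M[algC]_n) : char_poly f = \prod_(z <- rts f) ('X - z%:P).
Proof.
rewrite /rts; case: closed_field_poly_normal => r /= ->.
by rewrite (monicP (char_poly_monic f)) scale1r.
Qed.

Lemma size_rts n (f : 'M[algC]_n) : size (rts f) = n.
Proof.
have := size_char_poly f; rewrite char_rts size_prod_XsubC.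
by case.
Qed.

Definition Ev n (f : 'M[algC]_n) := undup (rts f).

Lemma iter_mulX (R : pzSemiRingType) (x : R) k : iter k ( *%R x) 1 = x ^+ k.
Proof. by elim: k => //= k ->; rewrite exprS. Qed.

Lemma char_dvd n (f : 'M[algC]_n) :
  char_poly f %| \prod_(x <- Ev f) gp n x.
Proof.
rewrite char_rts -big_undup_iterop_count /Ev.
apply: (big_ind2 (fun p q : {poly algC} => p %| q)) => //.
- by move=> p1 p2 q1 q2 H1 H2; apply: dvdp_mul.
- move=> x _; rewrite Monoid.iteropE iter_mulX /gp dvdp_exp2l //.
  by rewrite -{2}(size_rts f) count_size.
Qed.

Lemma full n (f : 'M[algC]_n) :
  (1%:M <= kermxpoly f (\prod_(x <- Ev f) gp n x))%MS.
Proof.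
case: n => [|n] in f *; first by rewrite thinmx0 sub0mx.
have /dvdpP [q ->] := char_dvd f.
rewrite /kermxpoly rmorphM /= Cayley_Hamilton mulr0.
by rewrite kermx0.
Qed.

Lemma sum_full n (f : 'M[algC]_n) : (1%:M <= \sum_(x <- Ev f) kermxpoly f (gp n x))%MS.
Proof. by rewrite -(kerprod _ _ (undup_uniq _)) full. Qed.

Lemma cap_gp k (g : 'M[algC]_k) e x y : x != y ->
  (kermxpoly g (gp e x) :&: kermxpoly g (gp e y) = 0)%MS.
Proof. by move=> xy; apply: mxdirect_kermxpoly; apply: coprime_gp. Qed.

Lemma G_out n (f : 'M[algC]_n) x : x \notin Ev f -> kermxpoly f (gp n x) = 0.
Proof.
move=> xE; apply/eqP; rewrite -submx0.
rewrite -(mxdirect_kermxpoly f (coprime_gp_prod n xE)) sub_capmx submx_refl /=.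
exact: submx_trans (submx1 _) (full f).
Qed.

Lemma restrict_full n (f V : 'M[algC]_n) : stablemx V f ->
  (V <= \sum_(x <- Ev f) (V :&: kermxpoly f (gp n x)))%MS.
Proof.
move=> Vf; set W := row_base V.
have Wf : stablemx W f by rewrite stablemx_row_base.
have rW : row_free W := row_base_free V.
have H1 : (1%:M <= kermxpoly (conjmx W f) (\prod_(x <- Ev f) gp n x))%MS.
  by rewrite sub_kermxpoly_conjmx // mul1mx; apply: submx_trans (submx1 _) (full f).
move: H1; rewrite (kerprod _ _ (undup_uniq _)) => H1.
have VW : (V <= W)%MS by rewrite /W eq_row_base.
apply: submx_trans VW _.
rewrite -[X in (X <= _)%MS]mul1mx.
apply: submx_trans (submxMr W H1) _.
apply: submx_trans (ssumMr _ _ _) _.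
apply: ssum_mono => x _; rewrite genmxE sub_capmx.
rewrite -sub_kermxpoly_conjmx // submx_refl andbT.
by apply: submx_trans (submxMl _ W) _; rewrite /W eq_row_base.
Qed.

Lemma rank_dir n (f : 'M[algC]_n) (r : seq algC) (Bm : algC -> 'M[algC]_n) :
  uniq r -> (forall x, x \in r -> (Bm x <= kermxpoly f (gp n x))%MS) ->
  \rank (\sum_(x <- r) Bm x)%MS = (\sum_(x <- r) \rank (Bm x))%N.
Proof.
elim: r => [|x r IH] /=; first by rewrite !big_nil mxrank0.
move=> /andP[xr ur] H; rewrite !big_cons mxrank_disjoint_sum ?IH //.
- by move=> y yr; apply: H; rewrite inE yr orbT.
apply/eqP; rewrite -submx0.
have D := mxdirect_kermxpoly f (coprime_gp_prod n xr).
apply: (submx_trans (_ : _ <= kermxpoly f (gp n x) :&: kermxpoly f (\prod_(y <- r) gp n y))%MS); last by rewrite D.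
apply: capmxS; first by apply: H; rewrite mem_head.
rewrite (kerprod _ _ ur).
apply: ssum_mono => y yr.
by apply: H; rewrite inE yr orbT.
Qed.

Lemma stab_cap n (X Y f : 'M[algC]_n) : stablemx X f -> stablemx Y f ->
  stablemx (X :&: Y)%MS f.
Proof.
move=> HX HY; rewrite sub_capmx; apply/andP; split.
  exact: submx_trans (submxMr f (capmxSl X Y)) HX.
exact: submx_trans (submxMr f (capmxSr X Y)) HY.
Qed.

Lemma pow_formula (R : pzRingType) (g h N : R) :
  g * h = h * g - N -> N * h = h * N ->
  forall k, g * h ^+ k.+1 = h ^+ k.+1 * g - (N * h ^+ k) *+ k.+1.
Proof.
move=> gh Nh; elim=> [|k IH]; first by rewrite expr1 expr0 mulr1 mulr1n.
have cN : GRing.comm N h by [].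
rewrite exprSr mulrA IH mulrBl -mulrA gh mulrBr mulrA -exprSr.
rewrite mulrnAl -[N * h ^+ k * h]mulrA -exprSr -(commrX k.+1 cN) [in RHS]mulrS opprD addrA.
by [].
Qed.
Lemma stab_nil n (f g N : 'M[algC]_n) x :
  f * g - g * f = N -> N * f = f * N -> stablemx (kermxpoly f (gp n x)) g.
Proof.
case: n => [|m] in f g N *; first by move=> *; rewrite (thinmx0 (_ *m g)) sub0mx.
move=> hfg hNf; rewrite kermxpolyE; set h := f - x%:M.
have hNh : N * h = h * N.
  by rewrite /h mulrBr mulrBl hNf -!mulmxE scalar_mxC.
have hgh : g * h = h * g - N.
  rewrite /h -hfg mulrBr mulrBl -!mulmxE scalar_mxC !mulmxE.
  by rewrite opprB addrA addrAC [f * g - _]addrC addrK addrC.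
apply: submx_trans (kerX_big h m.+1).
apply/sub_kermxP; rewrite addnS -mulmxA mulmxE (pow_formula hgh hNh).
have Kh : kermx (h ^+ m.+1) * h ^+ m.+1 = 0 by rewrite -mulmxE mulmx_ker.
have cN : GRing.comm N h by [].
rewrite -addnS exprD exprD mulrA (commrX m.+1 cN) -mulrA mulrBr -mulrnAr.
by rewrite !mulrA Kh !mul0r subrr.
Qed.

Lemma eig_c n d (a b c : 'M[algC]_n) g : (1 < d)%N ->
  a * c = c * a -> b * c = c * b -> a * b - b * a = c ^+ d.-1 *+ d ->
  eigenvalue c g -> g = 0.
Proof.
move=> d2 ac bc rel eig.
set V := eigenspace c g; set W := row_base V.
have rW : row_free W := row_base_free V.
have WV : (W <= V)%MS by rewrite /W eq_row_base.
have Wc : W *m c = g *: W by apply/eigenspaceP.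
have Wck k : W *m c ^+ k = g ^+ k *: W.
  elim: k => [|k IH]; first by rewrite expr0 scale1r; exact: mulmx1.
  by rewrite exprSr -mulmxE mulmxA IH -scalemxAl Wc scalerA -exprSr.
have sa : stablemx W a.
  by rewrite stablemx_row_base comm_mx_stable_eigenspace // /comm_mx !mulmxE ac.
have sb : stablemx W b.
  by rewrite stablemx_row_base comm_mx_stable_eigenspace // /comm_mx !mulmxE bc.
have key : conjmx W (a *m b) - conjmx W (b *m a) = (g ^+ d.-1 *+ d) *: 1%:M.
  have rel' : a *m b - b *m a = c ^+ d.-1 *+ d by rewrite !mulmxE.
  rewrite /conjmx -mulmxBl -mulmxBr rel' -scaler_nat -scalemxAr Wck scalerA -scalemxAl mulmxVp //.
  by rewrite mulr_natl.
have tr : \tr (conjmx W (a *m b) - conjmx W (b *m a)) = 0.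
  by rewrite !conjmxM ?inE // raddfB /= mxtrace_mulC subrr.
move: tr; rewrite key mxtraceZ mxtrace1 => /eqP.
rewrite mulf_eq0 => /orP[|]; last first.
  by rewrite pnatr_eq0 mxrank_eq0 (negPf eig).
rewrite -mulr_natr mulf_eq0 pnatr_eq0 expf_eq0 => /orP[/andP[_ /eqP]//|].
by move=> /eqP d0; rewrite d0 in d2.
Qed.

Lemma nil_c n d (a b c : 'M[algC]_n) : (1 < d)%N ->
  a * c = c * a -> b * c = c * b -> a * b - b * a = c ^+ d.-1 *+ d ->
  exists k, c ^+ k = 0.
Proof.
move=> d2 ac bc rel.
case: n => [|m] in a b c ac bc rel *; first by exists 0%N; exact: thinmx0.
exists (size (rts c)).
have chX : char_poly c = 'X ^+ size (rts c).
  rewrite char_rts (eq_big_seq (fun _ => 'X)); last first.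
    move=> z zr; have : eigenvalue c z.
      by rewrite eigenvalue_root_char char_rts root_prod_XsubC.
    by move=> /(eig_c d2 ac bc rel) ->; rewrite subr0.
  by rewrite big_const_seq count_predT iter_mulX.
by have := Cayley_Hamilton c; rewrite chX rmorphXn /= horner_mx_X.
Qed.

Unset Implicit Arguments. Set Strict Implicit. Set Printing Implicit Defensive.

Lemma trmxX (R : comNzRingType) n (M : 'M[R]_n) k : (M ^+ k)^T = M^T ^+ k.
Proof.
elim: k => [|k IH]; first by rewrite !expr0 tr_scalar_mx.
have e : M ^+ k.+1 = M ^+ k *m M by rewrite mulmxE exprSr.
rewrite e trmx_mul IH.
by rewrite mulmxE -exprS.
Qed.

Lemma geneigE n (A : 'M[algC]_n) l : geneig A l = kermxpoly A^T (gp n l).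
Proof. by rewrite /geneig kermxpolyE trmxX linearB /= tr_scalar_mx. Qed.

Lemma ssum_rank (T : eqType) n (r : seq T) (A : T -> 'M[algC]_n) :
  (\rank (\sum_(x <- r) A x)%MS <= \sum_(x <- r) \rank (A x))%N.
Proof.
elim: r => [|x r IH]; first by rewrite !big_nil mxrank0.
rewrite !big_cons; apply: leq_trans (mxrank_adds_leqif _ _) _.
by rewrite leq_add2l.
Qed.

Section Decomp.
Variables (n : nat) (a b : 'M[algC]_n).
Hypothesis hba : forall l, stablemx (kermxpoly a (gp n l)) b.
Let G (f : 'M[algC]_n) x := kermxpoly f (gp n x).
Let J (s : algC * algC) := (G a s.1 :&: G b s.2)%MS.
Let Pairs := [seq (x, y) | x <- Ev a, y <- Ev b].
Definition Sig := [seq s <- Pairs | J s != 0].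

Lemma Sig_uniq : uniq Sig.
Proof.
apply: filter_uniq; apply: allpairs_uniq; rewrite ?undup_uniq //.
by move=> [? ?] [? ?] _ _ /= [-> ->].
Qed.

Lemma Sig_mem s : s \in Sig <-> J s != 0.
Proof.
split; first by rewrite mem_filter => /andP[].
case: s => x y nz; rewrite mem_filter nz /=; apply: allpairs_f.
  apply/negPn/negP => xa; move: nz; rewrite /J /G /= (G_out xa) cap0mx.
  by rewrite eqxx.
apply/negPn/negP => yb; move: nz; rewrite /J /G /= (G_out yb) capmx0.
by rewrite eqxx.
Qed.

Lemma Sig_full : (1%:M <= \sum_(s <- Sig) J s)%MS.
Proof.
apply: submx_trans (sum_full a) _; apply: ssum_subP => x xa.
apply: submx_trans (restrict_full (hba x)) _; apply: ssum_subP => y yb.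
have [Jz|nz] := eqVneq (J (x, y)) 0.
  by move: Jz; rewrite /J /G /= => ->; rewrite sub0mx.
have := ssum_sup J (proj2 (Sig_mem (x, y)) nz); by [].
Qed.

Lemma Sig_rank : (\sum_(s <- Sig) \rank (J s) <= n)%N.
Proof.
rewrite big_filter big_mkcond /=.
apply: (@leq_trans (\sum_(s <- Pairs) \rank (J s))).
  by apply: leq_sum => s _; case: ifP.
rewrite big_allpairs.
apply: (@leq_trans (\sum_(x <- Ev a) \rank (G a x))); last first.
  rewrite -(rank_dir (f := a)) ?undup_uniq // ?rank_leq_col //.
apply: leq_sum => x _.
rewrite -(rank_dir (f := b) (Bm := fun y => J (x, y))) ?undup_uniq //.
  by apply: mxrankS; apply: ssum_subP => y _; apply: capmxSl.
by move=> y _; apply: capmxSr.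
Qed.

Lemma Sig_direct :
  (\rank (\sum_(s <- Sig) J s)%MS = \sum_(s <- Sig) \rank (J s))%N.
Proof.
have rn : \rank (\sum_(s <- Sig) J s)%MS = n.
  apply/eqP; rewrite eqn_leq rank_leq_col /=.
  by rewrite -{1}(mxrank1 algC n) mxrankS // Sig_full.
apply/eqP; rewrite eqn_leq ssum_rank rn Sig_rank //.
Qed.
End Decomp.

Theorem mainTheorem8 (d n : nat) (A B C : 'M[algC]_n) :
  (2 <= d)%N -> jacobi_rep d A B C ->
  [/\ (* each operator preserves the generalized eigenspaces of the others *)
      (preserves_geneigs A B /\ preserves_geneigs A C),
      (preserves_geneigs B A /\ preserves_geneigs B C),
      (preserves_geneigs C A /\ preserves_geneigs C B),
      (* rho(c) is nilpotent *)
      (exists k : nat, C ^+ k = 0) &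
      (* canonical decomposition into nonzero submodules rho_s, s in Sigma *)
      exists Sigma : seq (algC * algC),
        [/\ uniq Sigma,
            (forall s, (s \in Sigma) <-> (joint_geneig A B s != 0)),
            (\sum_(s <- Sigma) joint_geneig A B s == 1%:M)%MS,
            mxdirect (\sum_(s <- Sigma) joint_geneig A B s) &
            forall s, s \in Sigma ->
              [/\ op_stable (joint_geneig A B s) A,
                  op_stable (joint_geneig A B s) B,
                  op_stable (joint_geneig A B s) C &
                  [/\ forall l, (joint_geneig A B s :&: geneig A l != 0)%MS -> l = s.1,
                      forall l, (joint_geneig A B s :&: geneig B l != 0)%MS -> l = s.2 &
                      forall l, (joint_geneig A B s :&: geneig C l != 0)%MS -> l = 0]]]].
Proof.
move=> d2 [hBC hCA hAB].
rewrite /preserves_geneigs /op_stable.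
have jE s : joint_geneig A B s = (kermxpoly A^T (gp n s.1) :&: kermxpoly B^T (gp n s.2))%MS.
  by rewrite /joint_geneig !geneigE.
set a := A^T; set b := B^T; set c := C^T.
have ac : a * c = c * a.
  move: (congr1 trmx hCA); rewrite linearB /= !trmx_mul trmx0 => /eqP.
  by rewrite subr_eq0 !mulmxE => /eqP.
have bc : b * c = c * b.
  move: (congr1 trmx hBC); rewrite linearB /= !trmx_mul trmx0 => /eqP.
  by rewrite subr_eq0 !mulmxE => /eqP <-.
set X := c ^+ d.-1 *+ d.
have rel : a * b - b * a = X.
  move: (congr1 trmx hAB); rewrite linearD linearB /= !trmx_mul trmx0.
  rewrite raddfMn /= trmxX -/c -/X !mulmxE => /eqP; rewrite addr_eq0 => /eqP e.
  by rewrite -[X]opprK -e opprB.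
have caX : GRing.comm a X by apply: commrMn; apply: commrX.
have cbX : GRing.comm b X by apply: commrMn; apply: commrX.
have pAB l : stablemx (kermxpoly b (gp n l)) a.
  apply: (stab_nil (N := - X)); first by rewrite -rel opprB.
  by rewrite mulNr mulrN cbX.
have pBA l : stablemx (kermxpoly a (gp n l)) b.
  by apply: (stab_nil (N := X)) => //; rewrite caX.
have pAC l : stablemx (kermxpoly c (gp n l)) a.
  by apply: comm_mx_stable_kermxpoly; rewrite /comm_mx !mulmxE ac.
have pBC l : stablemx (kermxpoly c (gp n l)) b.
  by apply: comm_mx_stable_kermxpoly; rewrite /comm_mx !mulmxE bc.
have pCA l : stablemx (kermxpoly a (gp n l)) c.
  by apply: comm_mx_stable_kermxpoly; rewrite /comm_mx !mulmxE ac.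
have pCB l : stablemx (kermxpoly b (gp n l)) c.
  by apply: comm_mx_stable_kermxpoly; rewrite /comm_mx !mulmxE bc.
have [k ck] := nil_c d2 ac bc rel.
have Gc l : l != 0 -> kermxpoly c (gp n l) = 0.
  move=> l0; apply/eqP; rewrite -submx0.
  rewrite -(cap_gp c n l0) sub_capmx submx_refl /=.
  rewrite [kermxpoly c (gp n 0)]kermxpolyE raddf0 subr0; apply: submx_trans (submx1 _) _.
  apply: submx_trans (kerX_big c k); rewrite exprD ck mulr0.
  by rewrite kermx0.
split.
- by split => l; rewrite geneigE.
- by split => l; rewrite geneigE.
- by split => l; rewrite geneigE.
- by exists k; rewrite -(trmxK C) -/c -trmxX ck trmx0.
exists (Sig n a b); split.
- exact: Sig_uniq.
- by move=> s; rewrite jE; apply: Sig_mem.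
- rewrite (eq_bigr _ (fun s _ => jE s)); apply/andP; split; first exact: submx1.
  exact: Sig_full.
- rewrite /mxdirect_def /=.
  rewrite (eq_bigr _ (fun s _ => jE s)).
  rewrite [X in _ == X](eq_bigr _ (fun s _ => congr1 (fun M => \rank M) (jE s))).
  by apply/eqP; apply: Sig_direct.
move=> s _; rewrite !jE.
split.
- by apply: stab_cap; [apply: comm_mx_stable_kermxpoly | apply: pAB].
- by apply: stab_cap; [apply: pBA | apply: comm_mx_stable_kermxpoly].
- by apply: stab_cap; [apply: pCA | apply: pCB].
split => l; rewrite geneigE.
- move=> H; apply/eqP; apply: contraNT H => ne; rewrite -submx0.
  apply: submx_trans (capmxS (capmxSl _ _) (submx_refl _)) _.
  by rewrite cap_gp // eq_sym.
- move=> H; apply/eqP; apply: contraNT H => ne; rewrite -submx0.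
  apply: submx_trans (capmxS (capmxSr _ _) (submx_refl _)) _.
  by rewrite cap_gp // eq_sym.
- move=> H; apply/eqP; apply: contraNT H => ne.
  by rewrite -/c (Gc l ne) capmx0.
Qed.
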